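(* Let $W\in[0,1]^{k\times k}$ be a symmetric positive semidefinite matrix with unit diagonal, $\mu>0$, and consider linear utilities $u_i({\boldsymbol\theta})=W_i^\top{\boldsymbol\theta}$ with thresholds $\mu_i=\mu$ and strategy space $\mathbb{R}_+^k$. Let ${\boldsymbol\theta}^{\mathrm{eq}}$ be an optimal stable equilibrium, $I=\{i:\theta^{\mathrm{eq}}_i=0\}$, and $\bar W$ the restriction of $W$ (rows and columns) to $[k]\setminus I$. If $\bar{\boldsymbol\theta}$ is an optimal solution of $\min_{\bf x}\{\mathbf{1}^\top{\bf x}:\bar W{\bf x}\ge\mu\mathbf{1},\ {\bf x}\ge\mathbf{0}\}$, then $\bar W\bar{\boldsymbol\theta}=\mu\mathbf{1}$.
   Context: $W_i$ is the $i$-th column of $W$. ${\boldsymbol\theta}$ is feasible if $u_i({\boldsymbol\theta})\ge\mu$ for all $i$. A feasible ${\boldsymbol\theta}\in\mathbb{R}_+^k$ is a stable equilibrium if for no $i$ is there $0\le\theta_i'<\theta_i$ with $u_i(\theta_i',{\boldsymbol\theta}_{-i})\ge\mu$ (${\boldsymbol\theta}$ with $i$-th entry replaced). An optimal stable equilibrium minimizes $\mathbf{1}^\top{\boldsymbol\theta}$ among stable equilibria. *)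

(* Defs.v *)
From mathcomp Require Import all_boot all_order all_algebra.
Set Implicit Arguments. Unset Strict Implicit. Unset Printing Implicit Defensive.
Import Order.TTheory GRing.Theory Num.Theory.
Local Open Scope ring_scope.

Section Defs.
Variable R : realFieldType.
Variable k : nat.

Definition util (W : 'M[R]_k) (th : 'cV[R]_k) (i : 'I_k) : R :=
  \sum_(j < k) W j i * th j 0.

Definition replace (th : 'cV[R]_k) (i : 'I_k) (t : R) : 'cV[R]_k :=
  \col_j (if j == i then t else th j 0).

Definition feasible (W : 'M[R]_k) (mu : R) (th : 'cV[R]_k) : Prop :=
  forall i, mu <= util W th i.

Definition stable_eq (W : 'M[R]_k) (mu : R) (th : 'cV[R]_k) : Prop :=
  (forall i, 0 <= th i 0) /\ feasible W mu th /\
  (forall i (t : R), 0 <= t -> t < th i 0 -> ~ (mu <= util W (replace th i t) i)).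

Definition opt_stable_eq (W : 'M[R]_k) (mu : R) (th : 'cV[R]_k) : Prop :=
  stable_eq W mu th /\
  (forall th', stable_eq W mu th' -> \sum_i th i 0 <= \sum_i th' i 0).

Definition restrict (W : 'M[R]_k) (S : {set 'I_k}) : 'M[R]_#|S| :=
  \matrix_(a, b) W (enum_val a) (enum_val b).
End Defs.

Section LP.
Variable R : realFieldType.
Variable n : nat.
Definition lp_feasible (Wb : 'M[R]_n) (mu : R) (x : 'cV[R]_n) : Prop :=
  (forall a, 0 <= x a 0) /\ (forall a, mu <= (Wb *m x) a 0).
Definition lp_optimal (Wb : 'M[R]_n) (mu : R) (x : 'cV[R]_n) : Prop :=
  lp_feasible Wb mu x /\
  (forall y, lp_feasible Wb mu y -> \sum_a x a 0 <= \sum_a y a 0).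
End LP.

(* Main.v *)
Require Import Defs.
From mathcomp Require Import all_boot all_order all_algebra.
From mathcomp Require Import ring lra.
Import Order.TTheory GRing.Theory Num.Theory.
Local Open Scope ring_scope.

Lemma key (R : realFieldType) n (Wb : 'M[R]_n) mu (x y : 'cV[R]_n) :
  0 < mu -> Wb^T = Wb -> (forall a, 0 < y a 0) -> Wb *m y = mu *: const_mx 1 ->
  lp_optimal Wb mu x -> Wb *m x = mu *: const_mx 1.
Proof.
move=> mupos Wsym ypos Wy [[x0 Wx] xopt].
have Wyb b : (Wb *m y) b 0 = mu by rewrite Wy !mxE mulr1.
have yfeas : lp_feasible Wb mu y.
  by split=> a; [exact: ltW | rewrite Wyb].
have hle := xopt _ yfeas.
have E : \sum_a y a 0 * (Wb *m x) a 0 = mu * \sum_a x a 0.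
  transitivity (\sum_a \sum_b y a 0 * (Wb a b * x b 0)).
    by apply: eq_bigr => a _; rewrite mxE big_distrr.
  rewrite exchange_big big_distrr /=; apply: eq_bigr => b _.
  rewrite -(Wyb b) mxE big_distrl /=; apply: eq_bigr => a _.
  have -> : Wb a b = Wb b a by rewrite -{1}Wsym mxE.
  ring.
have Hnn a : 0 <= y a 0 * ((Wb *m x) a 0 - mu).
  by apply: mulr_ge0; [exact: ltW | rewrite subr_ge0; exact: Wx].
have H0 : \sum_a y a 0 * ((Wb *m x) a 0 - mu) == 0.
  rewrite eq_le; apply/andP; split; last by apply: sumr_ge0 => a _.
  under eq_bigr do rewrite mulrBr.
  rewrite sumrB E -big_distrl /=.
  set sx := \sum_a x a 0 in hle *; set sy := \sum_a y a 0 in hle *.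
  nra.
have H := psumr_eq0P (fun a _ => Hnn a) (eqP H0).
apply/matrixP => a j; rewrite (ord1 j) !mxE mulr1.
have := H a isT; move/eqP; rewrite mulf_eq0 subr_eq0 (gt_eqF (ypos a)) /=.
by move/eqP; rewrite mxE.
Qed.

Theorem lemma3 (R : realFieldType) (k : nat) (W : 'M[R]_k) (mu : R)
  (W_sym : W^T = W)
  (W_psd : forall x : 'cV[R]_k, 0 <= (x^T *m W *m x) 0 0)
  (W_01 : forall i j, 0 <= W i j <= 1)
  (W_diag : forall i, W i i = 1)
  (mu_pos : 0 < mu)
  (theq : 'cV[R]_k) (Hopt : opt_stable_eq W mu theq)
  (thbar : 'cV[R]_#|[set i | theq i 0 != 0]|)
  (Hbar : lp_optimal (restrict W [set i | theq i 0 != 0]) mu thbar) :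
  restrict W [set i | theq i 0 != 0] *m thbar = mu *: const_mx 1.
Proof.
case: Hopt => [[Hnn [Hfeas Hstab]] _].
have Ws i j : W i j = W j i by rewrite -{1}W_sym mxE.
have Hrep i t : util W (replace theq i t) i = util W theq i + (t - theq i 0).
  rewrite /util (bigD1 i) //= [in RHS](bigD1 i) //= /replace mxE eqxx W_diag.
  have -> : \sum_(j < k | j != i) W j i * (\col_j0 (if j0 == i then t else theq j0 0)) j 0
      = \sum_(j < k | j != i) W j i * theq j 0.
    by apply: eq_bigr => j /negbTE ji; rewrite mxE ji.
  ring.
have tight i : theq i 0 != 0 -> util W theq i = mu.
  move=> ne; apply/eqP; rewrite eq_le Hfeas andbT leNgt; apply/negP => lt.
  have thp : 0 < theq i 0 by rewrite lt_def ne Hnn.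
  set d := util W theq i - mu.
  have mpos : 0 < Num.min (theq i 0) d by rewrite lt_min thp subr_gt0 lt.
  have mle1 : Num.min (theq i 0) d <= theq i 0 by rewrite ge_min lexx.
  have mle2 : Num.min (theq i 0) d <= d by rewrite ge_min lexx orbT.
  apply: (Hstab i (theq i 0 - Num.min (theq i 0) d)).
  - by rewrite subr_ge0.
  - by rewrite ltrBlDr ltrDl.
  - rewrite Hrep; rewrite /d in mle2; lra.
set S := [set i | theq i 0 != 0].
pose y : 'cV[R]_#|S| := \col_a theq (enum_val a) 0.
apply: (@key _ _ _ _ _ y) => //.
- by apply/matrixP => a b; rewrite !mxE Ws.
- move=> a; rewrite mxE; have := enum_valP a; rewrite inE => ne.
  by rewrite lt_def ne Hnn.
- apply/matrixP => a j; rewrite (ord1 j) !mxE mulr1.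
  have := enum_valP a; rewrite inE => /tight <-.
  rewrite /util.
  transitivity (\sum_(b < #|S|) W (enum_val b) (enum_val a) * theq (enum_val b) 0).
    by apply: eq_bigr => b _; rewrite !mxE Ws.
  rewrite -(big_enum_val (A := mem S) (fun j => W j (enum_val a) * theq j 0)).
  rewrite [RHS](bigID (mem S)) /=.
  rewrite [X in _ = _ + X]big1 ?addr0 //.
  by move=> j0; rewrite inE negbK => /eqP ->; rewrite mulr0.
Qed.
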